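(* Every admissible Poisson algebra $(\mathcal{P},\cdot)$ is power associative: for every $X\in\mathcal{P}$, defining $X^1=X$ and $X^{i+1}=X\cdot X^i$, one has $X^i\cdot X^j=X^{i+j}$ for all $i,j\ge 1$; in particular the subalgebra generated by any single element is associative.
   Context: $\mathbb{K}$ is a field of characteristic different from $2$ and $3$. For a bilinear product $\cdot$ on $\mathcal{P}$, its associator is $A(X,Y,Z)=(X\cdot Y)\cdot Z-X\cdot(Y\cdot Z)$. An admissible Poisson algebra is a $\mathbb{K}$-vector space $\mathcal{P}$ with a bilinear product $\cdot$ (not assumed associative) satisfying, for all $X,Y,Z$, $3A(X,Y,Z)=(X\cdot Z)\cdot Y+(Y\cdot Z)\cdot X-(Y\cdot X)\cdot Z-(Z\cdot X)\cdot Y$. *)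

(* Defs.v *)
From mathcomp Require Import all_boot all_order all_algebra.
Set Implicit Arguments. Unset Strict Implicit. Unset Printing Implicit Defensive.
Import GRing.Theory.
Local Open Scope ring_scope.

Definition bilinear_prod (K : fieldType) (V : lmodType K) (mul : V -> V -> V) : Prop :=
  (forall (a : K) (x y z : V), mul (a *: x + y) z = a *: mul x z + mul y z) /\
  (forall (a : K) (x y z : V), mul x (a *: y + z) = a *: mul x y + mul x z).

Definition admissible_poisson (K : fieldType) (V : lmodType K) (mul : V -> V -> V) : Prop :=
  bilinear_prod mul /\
  forall x y z : V,
    3%:R *: (mul (mul x y) z - mul x (mul y z)) =
      mul (mul x z) y + mul (mul y z) x - mul (mul y x) z - mul (mul z x) y.

(* Right-nested powers, shifted by one: npow mul X k = X^(k+1), with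
   X^1 = X and X^(i+1) = X . X^i. *)
Fixpoint npow (V : Type) (mul : V -> V -> V) (X : V) (k : nat) : V :=
  match k with
  | 0 => X
  | k'.+1 => mul X (npow mul X k')
  end.

(* Main.v *)
Require Import Defs.
From mathcomp Require Import all_boot all_order all_algebra.
Import GRing.Theory.
Local Open Scope ring_scope.

Lemma four_eq {K : fieldType} {P : lmodType K} {u v : P} :
  3%:R *: u = v - u -> 4%:R *: u = v.
Proof.
move=> H; have -> : (4%:R : K) = 3%:R + 1 by rewrite -natr1.
by rewrite scalerDl scale1r H subrK.
Qed.

Lemma zero_of {K : fieldType} {P : lmodType K} {n : nat} {u : P} :
  (n%:R : K) != 0 -> n%:R *: u = 0 -> u = 0.
Proof. by move=> Hn /eqP; rewrite scaler_eq0 (negbTE Hn) => /eqP. Qed.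

Theorem mainTheorem3 (K : fieldType) (P : lmodType K) (mul : P -> P -> P) :
  (2%:R : K) != 0 -> (3%:R : K) != 0 ->
  admissible_poisson mul ->
  forall X : P,
    (forall i j : nat,
        mul (npow mul X i) (npow mul X j) = npow mul X (i + j).+1) /\
    (forall i j k : nat,
        mul (mul (npow mul X i) (npow mul X j)) (npow mul X k) =
        mul (npow mul X i) (mul (npow mul X j) (npow mul X k))).
Proof.
move=> H2 H3 [_ Hid] X.
set N := npow mul X.
have H4 : (4%:R : K) != 0.
  by rewrite (_ : 4 = 2 * 2)%N // natrM mulf_neq0.
have key : forall m, (forall i j, (i + j <= m)%N -> mul (N i) (N j) = N (i + j).+1) ->
   forall a b, (a + b = m)%N ->
   3%:R *: (mul (N a.+1) (N b) - N m.+2) =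
     (mul (N m.+1) (N 0) - N m.+2) - (mul (N a.+1) (N b) - N m.+2).
  move=> m IH a b Hab.
  have E := Hid X (N a) (N b).
  have Ea : mul X (N a) = N a.+1 by [].
  have Eb : mul X (N b) = N b.+1 by [].
  have Eab : mul (N a) (N b) = N m.+1 by rewrite IH Hab.
  have EaX : mul (N a) X = N a.+1 by rewrite (IH a 0%N) ?addn0 // -Hab leq_addr.
  have EbX : mul (N b) X = N b.+1 by rewrite (IH b 0%N) ?addn0 // -Hab leq_addl.
  rewrite Ea Eb Eab EaX EbX in E.
  have Em : mul X (N m.+1) = N m.+2 by [].
  rewrite Em in E. rewrite E.
  change X with (N 0%N). 
  move: (mul (N b.+1) (N a)) (mul (N m.+1) (N 0)) (mul (N a.+1) (N b)) (N m.+2) => p q r t.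
  rewrite (addrC p) addrAC addrK opprB addrA subrK //.
have main : forall m i j, (i + j <= m)%N -> mul (N i) (N j) = N (i + j).+1.
  elim=> [|m IH] i j.
    by rewrite leqn0 addn_eq0 => /andP[/eqP-> /eqP->].
  rewrite leq_eqVlt => /orP[/eqP Hij|]; last by rewrite ltnS; exact: IH.
  case: i Hij => [|a] Hij; first by [].
  have Hab : (a + j = m)%N by move: Hij; rewrite addSn => -[].
  have Kv := key m IH m 0%N (addn0 m).
  have v0 : mul (N m.+1) (N 0) - N m.+2 = 0.
    by apply: (zero_of H3); rewrite Kv subrr.
  have Ku := four_eq (key m IH a j Hab).
  rewrite v0 in Ku.
  rewrite Hij; apply/eqP; rewrite -subr_eq0; apply/eqP.
  exact: (zero_of H4 Ku).
have PA : forall i j, mul (N i) (N j) = N (i + j).+1.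
  by move=> i j; apply: (main (i + j)%N).
split=> // i j k.
by rewrite !PA -addSnnS addnA.
Qed.
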